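(* Let $\lambda\in L'$ with $q(\lambda)<0$ and $\langle\lambda,\ell\rangle=0$, and let $J_\lambda([h,t],z)=\Psi_\lambda([0,t]z)/\Psi_\lambda(z)$ for $[h,t]\in\Gamma_\ell$, $z\in U_\epsilon(\ell)$. Then, for any $\zeta$ with $\mathcal{O}_\mathbf{k}=\mathbb{Z}+\zeta\mathbb{Z}$ and $\operatorname{Im}\zeta=|\delta|/2$, \[ J_\lambda([h,t], z) = e\Bigl( -2|d|\,\langle z,\lambda\rangle\operatorname{Re}\langle t,\lambda\rangle - 2\bigl(\operatorname{Re}\langle t,\lambda\rangle\bigr)^2\zeta + \operatorname{Re}\langle t,\lambda\rangle\,(\zeta +1) \Bigr); \] in particular the right-hand side does not depend on the choice of such $\zeta$.
   Context: Let $\mathbf{k}=\mathbb{Q}(\sqrt d)$ be imaginary quadratic of discriminant $d<0$ inside $\mathbb{C}$, ring of integers $\mathcal{O}_\mathbf{k}$, $\delta=\sqrt d$ (principal branch), inverse different $\mathfrak{d}^{-1}=\delta^{-1}\mathcal{O}_\mathbf{k}$; $e(x)=\exp(2\pi ix)$. $V$ is a hermitian $\mathbf{k}$-space of signature $(1,n+1)$, $n\ge1$, form $\langle\cdot,\cdot\rangle$ linear in the left argument, $q(x)=\langle x,x\rangle$, $V_\mathbb{C}=V\otimes\mathbb{C}$; $L$ an even integral full-rank $\mathcal{O}_\mathbf{k}$-lattice, $L'=\{x:\langle x,y\rangle\in\mathfrak{d}^{-1}\ \forall y\in L\}$; $\Gamma$ a finite-index subgroup of the subgroup of $\mathrm{SU}(L)$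 acting trivially on $L'/L$. Fix primitive isotropic $\ell\in L$, $\ell'\in L'$ with $\langle\ell,\ell'\rangle=\delta^{-1}$. $D=L\cap\ell^\perp\cap\ell'^\perp$, $W=D\otimes\mathbf{k}$, $W_\mathbb{C}=W\otimes\mathbb{C}$. Siegel domain $\mathcal{H}=\{(\tau,\sigma)\in\mathbb{C}\times W_\mathbb{C}:2\operatorname{Im}(\tau)|\delta||\langle\ell,\ell'\rangle|^2>-\langle\sigma,\sigma\rangle\}$, points represented by $z=z(\tau,\sigma)=\ell'-\delta\tau\langle\ell',\ell\rangle\ell+\sigma\in V_\mathbb{C}$. Elements $[h,t]$ ($h\in\mathbb{Q}$, $t\in W$) of the Heisenberg group act on $V_\mathbb{C}$ by $[h,0]:v\mapsto v-\langle v,\ell\rangle\delta h\ell$ and $[0,t]:v\mapsto v+\langle v,\ell\rangle t-\langle v,t\rangle\ell-\frac12\langle v,\ell\rangle\langle t,t\rangle\ell$, with group law $[h,t]\circ[h',t']=[h+h'+|\delta|^{-1}\operatorname{Im}\langle t',t\rangle,t+t']$. $\Gamma_\ell=\Gamma\cap$ Heisenberg group $=\{[h,t]:h\in N\mathbb{Z},t\in D_{\ell,\Gamma}\}$ for some $N\in\mathbb{Q}_{>0}$ and finite-index sublattice $D_{\ell,\Gamma}\subseteq D$. $U_\epsilon(\ell)=\{[z]:\langle z,z\rangle>0,\ \langle z,z\rangle|\langle\ell',\ell\rangle|^2/|\langle z,\ell\rangle|^2>1/\epsilon\}$ ($\epsilon>0$ small), identified with a subset of $\mathcal{H}$. The local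 Borcherds product is \[ \Psi_\lambda(z)=\prod_{\alpha\in\mathcal{O}_\mathbf{k}}\Bigl[1-e\Bigl(\sigma(\operatorname{Im}\alpha)\Bigl(\langle z,\lambda\rangle+\frac{\alpha}{|d|}\Bigr)\Bigr)\Bigr],\qquad \sigma(x)=1\text{ if }x\ge0,\ \sigma(x)=-1\text{ otherwise}, \] an absolutely convergent product on $U_\epsilon(\ell)$. *)

(* Defs.v *)
From HB Require Import structures.
From mathcomp Require Import all_boot all_order all_algebra.
From mathcomp Require Import all_classical all_reals all_analysis.
From mathcomp Require Import complex.
Import Order.TTheory GRing.Theory Num.Theory.
Import numFieldTopology.Exports numFieldNormedType.Exports.
Import ComplexField.

Set Implicit Arguments.
Unset Strict Implicit.
Unset Printing Implicit Defensive.

Local Open Scope ring_scope.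
Local Open Scope complex_scope.
Local Open Scope classical_set_scope.

Section Defs.
Variable R : realType.
Local Notation C := R[i].

Definition sqfree_int (m : int) : Prop :=
  forall p : nat, prime p -> ~ ((p * p)%:Z %| m)%Z.

Definition neg_fund_disc (d : int) : Prop :=
  (d < 0)%R /\
  ( ((d %% 4)%Z = 1 /\ sqfree_int d) \/
    (exists m : int, d = 4 * m /\ ((m %% 4)%Z = 2 \/ (m %% 4)%Z = 3)
                     /\ sqfree_int m) ).

(* delta = sqrt d, principal branch: for d < 0 this is i * sqrt |d| *)
Definition delta (d : int) : C := 0 +i* Num.sqrt (- (d%:~R : R)).

Definition omega (d : int) : C := ((d%:~R : R) +i* 0 + delta d) / 2.

Definition in_k (d : int) (x : C) : Prop :=
  exists a b : rat, x = ratr a + ratr b * delta d.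

Definition in_Ok (d : int) (x : C) : Prop :=
  exists a b : int, x = a%:~R + b%:~R * omega d.

(* elements of the inverse different d^{-1} = delta^{-1} O_k *)
Definition in_dinv (d : int) (x : C) : Prop := in_Ok d (x * delta d).

(* e(x) = exp(2 pi i x) *)
Definition ee (x : C) : C :=
  let r := expR (- (2 * pi * complex.Im x)) in
  (r * cos (2 * pi * complex.Re x)) +i* (r * sin (2 * pi * complex.Re x)).

Definition sgn0 (x : R) : C := if (0 <= x)%R then 1 else -1.

Definition clim (u : nat -> C) : C :=
  lim ((fun N => complex.Re (u N)) @ \oo) +i* lim ((fun N => complex.Im (u N)) @ \oo).

Variable m : nat.
Local Notation vec := 'rV[C]_m.

(* <x, y> = x H y^*, linear in the left argument *)
Definition herm (H : 'M[C]_m) (x y : vec) : C :=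
  (x *m H *m (map_mx conjc y)^T) 0 0.

Definition diag_sig : 'M[C]_m :=
  \matrix_(i, j) (if i == j then (if (i == 0 :> nat) then 1 else -1) else 0).

Definition herm_k_sig (d : int) (H : 'M[C]_m) : Prop :=
  H^T = map_mx conjc H /\
  (forall i j, in_k d (H i j)) /\
  exists P : 'M[C]_m, P \in unitmx /\ P *m H *m (map_mx conjc P)^T = diag_sig.

Definition in_V (d : int) (x : vec) : Prop := forall i, in_k d (x 0 i).

Definition is_lattice (d : int) (L : set vec) : Prop :=
  exists gens : seq vec,
    (forall v, v \in gens -> in_V d v) /\
    \rank (\matrix_(i < size gens, j < m) (gens`_i) 0 j) = m /\
    L = [set x | exists c : 'I_(size gens) -> C,
                   (forall i, in_Ok d (c i)) /\
                   x = \sum_(i < size gens) c i *: gens`_i].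

Definition even_integral (d : int) (H : 'M[C]_m) (L : set vec) : Prop :=
  (forall x y, L x -> L y -> in_dinv d (herm H x y)) /\
  (forall x, L x -> exists k : int, herm H x x = k%:~R).

Definition dual (d : int) (H : 'M[C]_m) (L : set vec) : set vec :=
  [set x | in_V d x /\ forall y, L y -> in_dinv d (herm H x y)].

Definition primitive (d : int) (L : set vec) (l : vec) : Prop :=
  L l /\ l != 0 /\ forall c : C, in_k d c -> L (c *: l) -> in_Ok d c.

Definition Dlat (H : 'M[C]_m) (L : set vec) (l l' : vec) : set vec :=
  [set x | L x /\ herm H x l = 0 /\ herm H x l' = 0].

(* action of the Heisenberg element [0,t] on V_C *)
Definition heis0 (H : 'M[C]_m) (l t v : vec) : vec :=
  v + herm H v l *: t - herm H v t *: l
    - (herm H v l * herm H t t / 2) *: l.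

Definition zpt (d : int) (H : 'M[C]_m) (l l' : vec) (tau : C) (sig : vec)
  : vec :=
  l' - (delta d * tau * herm H l' l) *: l + sig.

(* The product runs over alpha in O_k modulo
   |d| Z (the factor only depends on alpha mod |d| Z); representatives are
   alpha = a + b*omega, 0 <= a < |d|, b in Z, and the absolutely convergent
   product is evaluated as the limit of the partial products over |b| <= N. *)
Definition Psi_factor (d : int) (w alpha : C) : C :=
  1 - ee (sgn0 (complex.Im alpha) * (w + alpha / (`|d|%:R))).

Definition Psi (d : int) (H : 'M[C]_m) (lam z : vec) : C :=
  clim (fun N : nat =>
    \prod_(k < N.*2.+1) \prod_(a < `|d|%N)
      Psi_factor d (herm H z lam)
        (a%:R + ((k%:Z - N%:Z)%:~R) * omega d)).

End Defs.
Arguments delta {R} d.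
Arguments omega {R} d.

(* Main.v *)
Require Import Defs.
From HB Require Import structures.
From mathcomp Require Import all_boot all_order all_algebra.
From mathcomp Require Import all_classical all_reals all_analysis.
From mathcomp Require Import complex.
From mathcomp Require Import ring lra zify.
Import Order.TTheory GRing.Theory Num.Theory.
Import numFieldTopology.Exports numFieldNormedType.Exports.
Import ComplexField.
Import Normc.
Local Open Scope ring_scope.
Local Open Scope complex_scope.

Section EE.
Variable R : realType.
Local Notation C := R[i].

Lemma eeD (x y : C) : ee (x + y) = ee x * ee y.
Proof.
case: x => a b; case: y => c e; rewrite /ee /=.
have -> : - (2 * pi * (b + e)) = - (2 * pi * b) + - (2 * pi * e) :> R by ring.
have -> : 2 * pi * (a + c) = 2 * pi * a + 2 * pi * c :> R by ring.
rewrite expRD cosD sinD; apply/eqP; rewrite eq_complex /=; apply/andP; split; apply/eqP; ring.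
Qed.

Lemma ee0 : ee (0 : C) = 1.
Proof. rewrite /ee /= !mulr0 oppr0 expR0 cos0 sin0 mul1r mulr0. by []. Qed.

Lemma ee_realC (r : R) : ee r%:C = cos (2 * pi * r) +i* sin (2 * pi * r).
Proof. by rewrite /ee /= mulr0 oppr0 expR0 !mul1r. Qed.

Lemma cos_sin_2pi_nat (k : nat) : (cos (2 * pi * k%:R) = 1 :> R) /\ (sin (2 * pi * k%:R) = 0 :> R).
Proof.
elim: k => [|k [IH1 IH2]]; first by rewrite mulr0 cos0 sin0.
have -> : 2 * pi * k.+1%:R = 2 * pi * k%:R + pi *+ 2 :> R by rewrite -natr1; ring.
by rewrite cosD2pi sinD2pi.
Qed.

Lemma cos_sin_2pi_int (k : int) : (cos (2 * pi * k%:~R) = 1 :> R) /\ (sin (2 * pi * k%:~R) = 0 :> R).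
Proof.
case: k => k; first exact: cos_sin_2pi_nat.
rewrite NegzE mulrNz mulrN cosN sinN.
by have [-> ->] := cos_sin_2pi_nat k.+1; rewrite oppr0.
Qed.

Lemma intC (k : int) : (k%:~R : C) = (k%:~R : R)%:C.
Proof. by rewrite -(rmorph_int (real_complex R)). Qed.

Lemma natC (k : nat) : (k%:R : C) = (k%:R : R)%:C.
Proof. by rewrite -(rmorph_nat (real_complex R)). Qed.

Lemma ee_int (k : int) : ee (k%:~R : C) = 1.
Proof. by rewrite intC ee_realC; have [-> ->] := cos_sin_2pi_int k. Qed.

Lemma ee_shift (x : C) (k : int) : ee (x + k%:~R) = ee x.
Proof. by rewrite eeD ee_int mulr1. Qed.

Lemma eeN (x : C) : ee (- x) * ee x = 1.
Proof. by rewrite -eeD addNr ee0. Qed.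

Lemma ee_neq0 (x : C) : ee x != 0.
Proof. by apply/negP => /eqP h; have := eeN x; rewrite h mulr0 => /eqP; rewrite eq_sym oner_eq0. Qed.

Lemma ee_half : ee (2^-1 : C) = -1.
Proof.
have -> : (2^-1 : C) = (2^-1 : R)%:C by rewrite (fmorphV (real_complex R)) (natC 2).
rewrite ee_realC.
have -> : 2 * pi * 2^-1 = pi :> R by field.
rewrite cospi sinpi; apply/eqP; rewrite eq_complex /= ?oppr0 !eqxx //.
Qed.

Lemma ee_sum (I : Type) (r : seq I) (P : pred I) (f : I -> C) :
  \prod_(i <- r | P i) ee (f i) = ee (\sum_(i <- r | P i) f i).
Proof.
elim: r => [|a r IH]; first by rewrite !big_nil ee0.
rewrite !big_cons; case: (P a) => //; by rewrite IH eeD.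
Qed.

Lemma normc_ee (x : C) : normc (ee x) = expR (- (2 * pi * complex.Im x)).
Proof.
rewrite /ee /normc /=.
set r := expR _.
have -> : (r * cos (2 * pi * complex.Re x)) ^+ 2 + (r * sin (2 * pi * complex.Re x)) ^+ 2
   = r ^+ 2 * (cos (2 * pi * complex.Re x) ^+ 2 + sin (2 * pi * complex.Re x) ^+ 2) by ring.
rewrite cos2Dsin2 mulr1 sqrtr_sqr ger0_norm //; exact/ltW/expR_gt0.
Qed.

End EE.

Section ProdEst.
Variable R : realType.
Local Notation C := R[i].

Lemma normc_ge0 (x : C) : 0 <= normc x.
Proof. by case: x => a b; rewrite /normc sqrtr_ge0. Qed.

Lemma normc_1D (u : C) : normc (1 + u) <= 1 + normc u.
Proof. by have := le_normcD 1 u; rewrite normc1. Qed.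

Lemma normc_prod (I : Type) (r : seq I) (f : I -> C) :
  normc (\prod_(i <- r) f i) = \prod_(i <- r) normc (f i).
Proof.
elim: r => [|a r IH]; first by rewrite !big_nil normc1.
by rewrite !big_cons normcM IH.
Qed.

Lemma normc_prod1 (I : Type) (r : seq I) (u : I -> C) :
  normc (\prod_(i <- r) (1 + u i) - 1) <= \prod_(i <- r) (1 + normc (u i)) - 1.
Proof.
elim: r => [|a r IH]; first by rewrite !big_nil subrr normc0.
rewrite !big_cons.
set P := \prod_(i <- r) (1 + u i) in IH *.
set Q := \prod_(i <- r) (1 + normc (u i)) in IH *.
have -> : (1 + u a) * P - 1 = (1 + u a) * (P - 1) + u a by ring.
apply: (le_trans (le_normcD _ _)).
rewrite normcM.
have h1 := normc_1D (u a).
have h0 := normc_ge0 (P - 1).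
have h2 := normc_ge0 (u a).
have : normc (1 + u a) * normc (P - 1) <= (1 + normc (u a)) * (Q - 1).
  apply: ler_pM => //; exact: normc_ge0.
nra.
Qed.

Lemma prod_le_expR (I : Type) (r : seq I) (a : I -> R) :
  (forall i, 0 <= a i) -> \prod_(i <- r) (1 + a i) <= expR (\sum_(i <- r) a i).
Proof.
move=> a0; elim: r => [|x r IH]; first by rewrite !big_nil expR0.
rewrite !big_cons expRD; apply: ler_pM => //.
- by rewrite addr_ge0.
- by apply: prodr_ge0 => i _; rewrite addr_ge0.
- exact: expR_ge1Dx.
Qed.

Lemma expR_sub1 (y : R) : 0 <= y -> expR y - 1 <= y * expR y.
Proof.
move=> y0; have h := expR_ge1Dx (- y); rewrite expRN in h.
have ey := expR_gt0 y.
have : (1 - y) * expR y <= (expR y)^-1 * expR y by rewrite ler_pM2r.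
rewrite mulVf ?gt_eqF //; nra.
Qed.

Lemma Re_le_normc (z : C) : `|complex.Re z| <= normc z.
Proof.
case: z => a b; rewrite /normc /=.
rewrite -sqrtr_sqr; apply: ler_wsqrtr.
by rewrite lerDl sqr_ge0.
Qed.

Lemma Im_le_normc (z : C) : `|complex.Im z| <= normc z.
Proof.
case: z => a b; rewrite /normc /=.
rewrite -sqrtr_sqr; apply: ler_wsqrtr.
by rewrite lerDr sqr_ge0.
Qed.

Lemma normc_le_ReIm (z : C) : normc z <= `|complex.Re z| + `|complex.Im z|.
Proof.
case: z => a b; rewrite /normc /=.
have ha := normr_ge0 a; have hb := normr_ge0 b.
have e1 : `|a| ^+ 2 = a ^+ 2 by rewrite real_normK ?num_real.
have e2 : `|b| ^+ 2 = b ^+ 2 by rewrite real_normK ?num_real.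
rewrite -(ger0_norm (addr_ge0 ha hb)) -sqrtr_sqr; apply: ler_wsqrtr; nra.
Qed.

End ProdEst.
Arguments normc_ge0 {R}.
Arguments normc_1D {R}.
Arguments normc_prod {R I}.
Arguments normc_prod1 {R I}.
Arguments prod_le_expR {R I}.
Arguments expR_sub1 {R}.
Arguments Re_le_normc {R}.
Arguments Im_le_normc {R}.
Arguments normc_le_ReIm {R}.
Arguments eeD {R}.
Arguments ee_int {R}.
Arguments ee_shift {R}.
Arguments eeN {R}.
Arguments ee_neq0 {R}.
Arguments ee_sum {R I}.
Arguments normc_ee {R}.
Arguments intC {R}.
Arguments natC {R}.
Arguments ee_realC {R}.

Local Open Scope classical_set_scope.

Section Windows.
Variables (T : Type) (idx : T) (op : Monoid.com_law idx).

Lemma ordW (F : nat -> T) n :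
  \big[op/idx]_(k < n) F k = \big[op/idx]_(0 <= k < n) F k.
Proof. exact: (esym (big_mkord xpredT F)). Qed.

Lemma big_symS (F : int -> T) (N : nat) :
  \big[op/idx]_(k < N.+1.*2.+1) F (k%:Z - N.+1%:Z) =
  op (F (- N.+1%:Z)) (op (\big[op/idx]_(k < N.*2.+1) F (k%:Z - N%:Z)) (F N.+1%:Z)).
Proof.
rewrite (ordW (fun k => F (k%:Z - N.+1%:Z))) (ordW (fun k => F (k%:Z - N%:Z))).
have -> : N.+1.*2.+1 = (N.*2.+1).+2 by rewrite doubleS.
rewrite big_nat_recl // big_nat_recr //=.
f_equal; first by f_equal; lia.
f_equal; last by f_equal; lia.
by apply: eq_bigr => k _; f_equal; lia.
Qed.

Lemma big_sym_pos (F : int -> T) (N e0 : nat) :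
  \big[op/idx]_(k < (N + e0).*2.+1) F (k%:Z - (N + e0)%:Z) =
  op (\big[op/idx]_(k < e0.*2) F (k%:Z - (N + e0)%:Z))
     (\big[op/idx]_(k < N.*2.+1) F (k%:Z - N%:Z + e0%:Z)).
Proof.
rewrite (ordW (fun k => F (k%:Z - (N + e0)%:Z))) (ordW (fun k => F (k%:Z - (N + e0)%:Z))).
rewrite (ordW (fun k => F (k%:Z - N%:Z + e0%:Z))).
rewrite (big_cat_nat _ (n := e0.*2)) //=; last by lia.
f_equal.
rewrite -{1}(ssrnat.add0n (e0.*2)%N) big_addn.
have -> : ((N + e0).*2.+1 - e0.*2 = N.*2.+1)%N by lia.
by apply: eq_bigr => k _; f_equal; lia.
Qed.

Lemma big_sym_neg (F : int -> T) (N e0 : nat) :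
  \big[op/idx]_(k < (N + e0).*2.+1) F (k%:Z - (N + e0)%:Z) =
  op (\big[op/idx]_(k < N.*2.+1) F (k%:Z - N%:Z - e0%:Z))
     (\big[op/idx]_(k < e0.*2) F ((N.*2.+1 + k)%:Z - (N + e0)%:Z)).
Proof.
rewrite (ordW (fun k => F (k%:Z - (N + e0)%:Z))) (ordW (fun k => F (k%:Z - N%:Z - e0%:Z))).
rewrite (ordW (fun k => F ((N.*2.+1 + k)%:Z - (N + e0)%:Z))).
rewrite (big_cat_nat _ (n := N.*2.+1)) //=; last by lia.
f_equal.
  by apply: eq_bigr => k _; f_equal; lia.
rewrite -{1}(ssrnat.add0n (N.*2.+1)%N) big_addn.
have -> : ((N + e0).*2.+1 - N.*2.+1 = e0.*2)%N by lia.
by apply: eq_bigr => k _; f_equal; lia.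
Qed.
End Windows.

Section Abstract.
Variable R : realType.
Local Notation C := R[i].

Lemma ReB (x y : C) : complex.Re (x - y) = complex.Re x - complex.Re y.
Proof. by case: x => a b; case: y. Qed.
Lemma ImB (x y : C) : complex.Im (x - y) = complex.Im x - complex.Im y.
Proof. by case: x => a b; case: y. Qed.
Lemma normcB (x y : C) : normc (x - y) = normc (y - x).
Proof. by rewrite -normcN opprB. Qed.
Lemma normc_tri (x y z : C) : normc (x - z) <= normc (x - y) + normc (y - z).
Proof. have -> : x - z = (x - y) + (y - z) by ring. exact: le_normcD. Qed.

Lemma small_mul (q a : R) : 0 <= q -> q < 1 -> 0 <= a ->
  forall eps, 0 < eps -> exists N0, forall N, (N0 <= N)%N -> a * q ^+ N < eps.
Proof.
move=> q0 q1 a0 eps e0.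
have hq : `|q| < 1 by rewrite ger0_norm.
have /cvgrPdist_lt H := cvg_expr hq.
have e1 : 0 < eps / (a + 1) by rewrite divr_gt0 // ltr_wpDl.
have [N _ HN] := H _ e1.
exists N => n hn; have := HN n hn; rewrite /= sub0r normrN ger0_norm ?exprn_ge0 //.
rewrite ltr_pdivlMr ?ltr_wpDl // => h.
have hq0 : 0 <= q ^+ n by rewrite exprn_ge0.
nra.
Qed.

Variables (f : int -> C) (K q : R).
Hypotheses (K0 : 0 <= K) (q0 : 0 <= q) (q1 : q < 1)
  (hf : forall b, normc (f b - 1) <= K * q ^+ absz b).

Definition PP N := \prod_(k < N.*2.+1) f (k%:Z - N%:Z).
Definition SS N := \sum_(k < N.*2.+1) q ^+ absz (k%:Z - N%:Z).

Lemma normf_le b : normc (f b) <= 1 + K * q ^+ absz b.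
Proof.
have -> : f b = 1 + (f b - 1) by ring.
have := normc_1D (f b - 1); have := hf b; lra.
Qed.

Lemma SS_eq N : SS N * (1 - q) = 1 + q - 2 * q ^+ N.+1.
Proof.
elim: N => [|N IH].
  rewrite /SS big_ord1 /= expr1 expr0; ring.
rewrite /SS (big_symS _ _ _ (fun b => q ^+ absz b)) /=.
rewrite -/(SS N).
have -> : (q ^+ N.+1 + (SS N + q ^+ N.+1)) * (1 - q) = SS N * (1 - q) + 2 * q ^+ N.+1 * (1 - q) by ring.
rewrite IH !exprS; ring.
Qed.

Definition Sb := (1 + q) / (1 - q).
Definition E := expR (K * Sb).

Lemma SS_le N : SS N <= Sb.
Proof.
rewrite /Sb ler_pdivlMr ?subr_gt0 // SS_eq.
have : 0 <= q ^+ N.+1 by rewrite exprn_ge0.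
lra.
Qed.

Lemma prod_norm_le (I : Type) (r : seq I) (g : I -> int) :
  normc (\prod_(i <- r) f (g i)) <= expR (K * \sum_(i <- r) q ^+ absz (g i)).
Proof.
rewrite normc_prod mulr_sumr.
have h := prod_le_expR r (fun i => K * q ^+ absz (g i)).
apply: le_trans (h _); last by move=> i; rewrite mulr_ge0 ?exprn_ge0.
apply: ler_prod => i _; rewrite normc_ge0 /=; exact: normf_le.
Qed.

Lemma PP_le N : normc (PP N) <= E.
Proof.
have h := prod_norm_le _ (index_enum 'I_(N.*2.+1)) (fun k => k%:Z - N%:Z).
apply: le_trans h _.
rewrite ler_expR; apply: ler_wpM2l => //; exact: SS_le.
Qed.

Lemma PP_step N : normc (PP N.+1 - PP N) <= E * ((2 * K + K ^+ 2) * q ^+ N.+1).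
Proof.
have -> : PP N.+1 - PP N = PP N * (f (- N.+1%:Z) * f N.+1%:Z - 1).
  rewrite /PP (big_symS _ _ _ f) /=; ring.
rewrite normcM; apply: ler_pM; [exact: normc_ge0|exact: normc_ge0|exact: PP_le|].
have -> : f (- N.+1%:Z) * f N.+1%:Z - 1 =
  (f (- N.+1%:Z) - 1) * (f N.+1%:Z - 1) + (f (- N.+1%:Z) - 1) + (f N.+1%:Z - 1) by ring.
have h1 := hf (- N.+1%:Z); rewrite abszN /= in h1.
have h2 := hf N.+1%:Z; rewrite /= in h2.
set x := f (- N.+1%:Z) - 1 in h1 *; set y := f N.+1%:Z - 1 in h2 *.
have hx := normc_ge0 x; have hy := normc_ge0 y.
have hq : 0 <= q ^+ N.+1 <= 1 by apply/andP; split; [exact: exprn_ge0 | exact: exprn_ile1 q0 (ltW q1)].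
apply: le_trans (le_normcD _ _) _.
apply: le_trans (lerD (le_normcD _ _) (lexx _)) _.
rewrite normcM.
have : normc x * normc y <= (K * q ^+ N.+1) * (K * q ^+ N.+1) by apply: ler_pM.
have : (K * q ^+ N.+1) * (K * q ^+ N.+1) <= K ^+ 2 * q ^+ N.+1.
  rewrite mulrACA -expr2 ler_wpM2l ?sqr_ge0 //.
  case/andP: hq => ha hb; rewrite -[X in _ <= X]mulr1; exact: ler_wpM2l.
nra.
Qed.

Definition cst := E * (2 * K + K ^+ 2).

Lemma cst_ge0 : 0 <= cst.
Proof. rewrite /cst mulr_ge0 // ?addr_ge0 ?mulr_ge0 ?sqr_ge0 //; exact/ltW/expR_gt0. Qed.

Lemma PP_cauchy N i : normc (PP (N + i) - PP N) * (1 - q) <= cst * q ^+ N.+1 * (1 - q ^+ i).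
Proof.
elim: i => [|i IH]; first by rewrite addn0 subrr normc0 mul0r expr0 subrr mulr0.
apply: le_trans (ler_wpM2r _ (normc_tri _ (PP (N + i)) _)) _; first by rewrite subr_ge0 ltW.
have h := PP_step (N + i); rewrite -addnS in h.
have e1 : q ^+ (N + i.+1) = q ^+ N.+1 * q ^+ i by rewrite -exprD addSn addnS.
have e2 : q ^+ i.+1 = q * q ^+ i by rewrite exprS.
rewrite e1 in h; rewrite e2.
have hc := cst_ge0; rewrite /cst in hc h.
have hq : 0 <= q ^+ N.+1 by rewrite exprn_ge0.
have hqi : 0 <= q ^+ i by rewrite exprn_ge0.
rewrite /cst in IH *.
set A := normc _ in h; set B := normc _ in IH.
have : A * (1 - q) <= E * ((2 * K + K ^+ 2) * (q ^+ N.+1 * q ^+ i)) * (1 - q).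
  by apply: ler_wpM2r => //; rewrite subr_ge0 ltW.
rewrite -/A -/B.
set c := E * (2 * K + K ^+ 2) in hc IH *.
rewrite mulrA -/c.
set Q1 := q ^+ N.+1 in hq IH *; set Qi := q ^+ i in hqi IH *.
move=> hA.
have -> : (A + B) * (1 - q) = A * (1 - q) + B * (1 - q) by ring.
have -> : c * Q1 * (1 - q * Qi) = c * (Q1 * Qi) * (1 - q) + c * Q1 * (1 - Qi) by ring.
lra.
Qed.

Lemma PP_cauchy' N M : (N <= M)%N -> normc (PP M - PP N) <= cst / (1 - q) * q ^+ N.
Proof.
move=> /subnKC <-; set i := (M - N)%N.
have h := PP_cauchy N i.
rewrite -ler_pdivlMr ?subr_gt0 // in h.
apply: le_trans h _.
have hc := cst_ge0.
have hq : 0 <= q ^+ N.+1 <= q ^+ N by rewrite exprn_ge0 // exprS ler_piMl ?exprn_ge0 // ltW.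
have hqi : 0 <= q ^+ i <= 1 by rewrite exprn_ge0 // exprn_ile1 // ltW.
rewrite [cst / _ * _]mulrAC; apply: ler_wpM2r; first by rewrite invr_ge0 subr_ge0 ltW.
rewrite -mulrA; apply: ler_wpM2l => //.
case/andP: hq => h1 h2; case/andP: hqi => h3 h4.
nra.
Qed.


Lemma PP_cvg_Re : cvg ((fun N => complex.Re (PP N)) @ \oo).
Proof.
apply: cauchy_cvg; apply: cauchy_exP => eps e0.
have a0 : 0 <= cst / (1 - q) by rewrite divr_ge0 ?cst_ge0 // subr_ge0 ltW.
have [N0 HN] := small_mul _ _ q0 q1 a0 _ e0.
exists (complex.Re (PP N0)); exists N0 => // n /= hn.
rewrite -ball_normE /ball_ /= -ReB.
apply: le_lt_trans (Re_le_normc _) _; rewrite normcB.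
apply: le_lt_trans (PP_cauchy' _ _ hn) _; exact: HN.
Qed.

Lemma PP_cvg_Im : cvg ((fun N => complex.Im (PP N)) @ \oo).
Proof.
apply: cauchy_cvg; apply: cauchy_exP => eps e0.
have a0 : 0 <= cst / (1 - q) by rewrite divr_ge0 ?cst_ge0 // subr_ge0 ltW.
have [N0 HN] := small_mul _ _ q0 q1 a0 _ e0.
exists (complex.Im (PP N0)); exists N0 => // n /= hn.
rewrite -ball_normE /ball_ /= -ImB.
apply: le_lt_trans (Im_le_normc _) _; rewrite normcB.
apply: le_lt_trans (PP_cauchy' _ _ hn) _; exact: HN.
Qed.

Lemma PP_lim eps : 0 < eps ->
  exists N0, forall N, (N0 <= N)%N -> normc (PP N - clim PP) < eps.
Proof.
move=> e0; have e2 : 0 < eps / 2 by rewrite divr_gt0.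
have /cvgrPdist_lt /(_ _ e2) [N1 _ H1] := PP_cvg_Re.
have /cvgrPdist_lt /(_ _ e2) [N2 _ H2] := PP_cvg_Im.
exists (N1 + N2)%N => N hN.
have h1 := H1 N (leq_trans (leq_addr _ _) hN).
have h2 := H2 N (leq_trans (leq_addl _ _) hN).
apply: le_lt_trans (normc_le_ReIm _) _.
rewrite ReB ImB /clim /= in h1 h2 *.
rewrite distrC in h1; rewrite distrC in h2.
lra.
Qed.

Lemma tail_le n M (g : 'I_n -> int) : (forall k, (M <= absz (g k))%N) ->
  normc (\prod_(k < n) f (g k) - 1) <= n%:R * K * q ^+ M * expR (n%:R * K).
Proof.
move=> hg.
have -> : \prod_(k < n) f (g k) = \prod_(k < n) (1 + (f (g k) - 1)).
  by apply: eq_bigr => k _; ring.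
apply: le_trans (normc_prod1 _ _) _.
set S := \sum_(k < n) normc (f (g k) - 1).
have hqM : 0 <= q ^+ M <= 1 by rewrite exprn_ge0 // exprn_ile1 // ltW.
have hS : S <= n%:R * (K * q ^+ M).
  have -> : n%:R * (K * q ^+ M) = \sum_(k < n) (K * q ^+ M)
    by rewrite sumr_const card_ord mulr_natl.
  rewrite /S; apply: ler_sum => k _.
  apply: le_trans (hf _) _; apply: ler_wpM2l => //.
  exact: ler_wiXn2l q0 (ltW q1) _ _ (hg k).
have hS0 : 0 <= S by rewrite /S sumr_ge0 // => k _; exact: normc_ge0.
have h1 := prod_le_expR (index_enum 'I_n) (fun k => normc (f (g k) - 1)) (fun k => normc_ge0 _).
rewrite -/S in h1.
have h2 := expR_sub1 _ hS0.
have hK : S <= n%:R * K.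
  apply: le_trans hS _; apply: ler_wpM2l => //; case/andP: hqM => ? ?.
  rewrite -[X in _ <= X]mulr1; exact: ler_wpM2l.
have he : expR S <= expR (n%:R * K) by rewrite ler_expR.
have h3 : S * expR S <= n%:R * K * q ^+ M * expR (n%:R * K).
  rewrite -(mulrA (n%:R)); apply: ler_pM => //; exact/ltW/expR_gt0.
lra.
Qed.

Lemma Qwin_claim (e : int) N :
  normc (PP (N + absz e) - \prod_(k < N.*2.+1) f (k%:Z - N%:Z + e)) <=
  E * ((absz e).*2%:R * K * q ^+ (N - absz e) * expR ((absz e).*2%:R * K)).
Proof.
have HQ : forall e0 (Q T : C), normc Q <= E ->
  normc (T - 1) <= e0.*2%:R * K * q ^+ (N - e0) * expR (e0.*2%:R * K) ->
  normc (Q * T - Q) <= E * (e0.*2%:R * K * q ^+ (N - e0) * expR (e0.*2%:R * K)).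
  move=> e0 Q T h1 h2; have -> : Q * T - Q = Q * (T - 1) by ring.
  rewrite normcM; apply: ler_pM => //; exact: normc_ge0.
have HS : forall e0 (I : Type) (r : seq I) (g : I -> int), 
    \sum_(i <- r) q ^+ absz (g i) <= SS (N + e0) ->
    normc (\prod_(i <- r) f (g i)) <= E.
  move=> e0 I r g h; apply: le_trans (prod_norm_le _ _ _) _.
  rewrite ler_expR; apply: ler_wpM2l => //; apply: le_trans h _; exact: SS_le.
case: e => n /=.
- rewrite /PP (big_sym_pos _ _ _ f) /= mulrC; apply: HQ.
    apply: (HS n); rewrite /SS (big_sym_pos _ _ _ (fun b => q ^+ absz b)) lerDr.
    by rewrite sumr_ge0 // => k _; rewrite exprn_ge0.
  apply: tail_le => k; have := ltn_ord k; lia.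
- have -> : \prod_(k < N.*2.+1) f (k%:Z - N%:Z + Negz n) =
     \prod_(k < N.*2.+1) f (k%:Z - N%:Z - n.+1%:Z).
    by apply: eq_bigr => k _; f_equal; rewrite NegzE; lia.
  rewrite /PP (big_sym_neg _ _ _ f) /=; apply: HQ.
    apply: (HS n.+1); rewrite /SS (big_sym_neg _ _ _ (fun b => q ^+ absz b)) lerDl.
    by rewrite sumr_ge0 // => k _; rewrite exprn_ge0.
  apply: tail_le => k; have := ltn_ord k; lia.
Qed.

Lemma Qwin_lim (e : int) eps : 0 < eps ->
  exists N0, forall N, (N0 <= N)%N ->
    normc (\prod_(k < N.*2.+1) f (k%:Z - N%:Z + e) - clim PP) < eps.
Proof.
move=> e0; have e2 : 0 < eps / 2 by rewrite divr_gt0.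
set a := E * ((absz e).*2%:R * K * expR ((absz e).*2%:R * K)).
have a0 : 0 <= a.
  by rewrite /a !mulr_ge0 //; apply/ltW/expR_gt0.
have [N1 H1] := small_mul _ _ q0 q1 a0 _ e2.
have [N2 H2] := PP_lim _ e2.
exists (N1 + N2 + absz e)%N => N hN.
apply: le_lt_trans (normc_tri _ (PP (N + absz e)) _) _.
have h1 := Qwin_claim e N.
have h2 := H1 (N - absz e)%N ltac:(lia).
have h3 := H2 (N + absz e)%N ltac:(lia).
rewrite normcB.
have : E * ((absz e).*2%:R * K * q ^+ (N - absz e) * expR ((absz e).*2%:R * K)) = a * q ^+ (N - absz e).
  by rewrite /a; ring.
lra.
Qed.

End Abstract.

Section ClimEq.
Variable R : realType.
Local Notation C := R[i].
Lemma clim_eq (u : nat -> C) (L : C) :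
  (forall eps : R, 0 < eps -> exists N0, forall N, (N0 <= N)%N -> normc (u N - L) < eps) ->
  clim u = L.
Proof.
move=> h.
have hRe : (fun N => complex.Re (u N)) @ \oo --> complex.Re L.
  apply/cvgrPdist_lt => eps e0; have [N0 H] := h eps e0.
  exists N0 => // n /= hn; rewrite distrC -ReB.
  exact: le_lt_trans (Re_le_normc _) (H n hn).
have hIm : (fun N => complex.Im (u N)) @ \oo --> complex.Im L.
  apply/cvgrPdist_lt => eps e0; have [N0 H] := h eps e0.
  exists N0 => // n /= hn; rewrite distrC -ImB.
  exact: le_lt_trans (Im_le_normc _) (H n hn).
rewrite /clim; clear h; case: L hRe hIm => a b hRe hIm /=.
by congr Complex; apply: cvg_lim.
Qed.
End ClimEq.


Section Concrete.
Variables (R : realType) (d : int).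
Hypothesis hd0 : d < 0.
Local Notation C := R[i].
Local Notation D := (absz d).
Definition sq : R := Num.sqrt (- (d%:~R : R)).

Lemma D_gt0 : (0 < D)%N.
Proof. by rewrite absz_gt0; apply: contraTneq hd0 => ->. Qed.

Lemma dR : (d%:~R : R) = - (D%:R).
Proof. by rewrite natr_absz ltr0_norm // mulrNz opprK. Qed.

Lemma mulC_real (a b r : R) : (a +i* b) * r%:C = (a * r) +i* (b * r).
Proof. by apply/eqP; rewrite eq_complex /= !mulr0 subr0 add0r !eqxx. Qed.

Lemma divC_real (a b r : R) : (a +i* b) / r%:C = (a / r) +i* (b / r).
Proof. by rewrite -fmorphV mulC_real. Qed.

Lemma C2 : (2 : C) = (2 : R)%:C.
Proof. exact: natC 2. Qed.

Lemma sq_gt0 : 0 < sq.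
Proof. rewrite /sq sqrtr_gt0 dR opprK ltr0n; exact: D_gt0. Qed.

Lemma sq2 : sq ^+ 2 = D%:R.
Proof. by rewrite /sq sqr_sqrtr dR opprK. Qed.

Lemma delta_eq : delta d = 0 +i* sq :> C.
Proof. by []. Qed.

Lemma omega_eq : omega d = (d%:~R / 2) +i* (sq / 2) :> C.
Proof.
rewrite /omega delta_eq C2.
have -> : (d%:~R +i* 0 + 0 +i* sq : C) = d%:~R +i* sq.
  by apply/eqP; rewrite eq_complex /= addr0 add0r !eqxx.
by rewrite divC_real.
Qed.


Lemma ImD (x y : C) : complex.Im (x + y) = complex.Im x + complex.Im y.
Proof. by case: x => a b; case: y. Qed.
Lemma ReD (x y : C) : complex.Re (x + y) = complex.Re x + complex.Re y.
Proof. by case: x => a b; case: y. Qed.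

Lemma Im_realC_mul (r : R) (y : C) : complex.Im (r%:C * y) = r * complex.Im y.
Proof. by case: y => a b /=; rewrite mul0r addr0. Qed.

Lemma Re_realC_mul (r : R) (y : C) : complex.Re (r%:C * y) = r * complex.Re y.
Proof. by case: y => a b /=; rewrite mul0r subr0. Qed.

Lemma Im_alpha (a : nat) (b : int) :
  complex.Im (a%:R + b%:~R * omega d : C) = b%:~R * (sq / 2).
Proof. by rewrite natC intC omega_eq /= mul0r !addr0 add0r. Qed.

Lemma Re_alpha (a : nat) (b : int) :
  complex.Re (a%:R + b%:~R * omega d : C) = a%:R + b%:~R * (d%:~R / 2).
Proof. by rewrite natC intC omega_eq /= mul0r subr0. Qed.

Lemma sgn0E (x : R) : sgn0 x = (if 0 <= x then 1 else -1 : R)%:C.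
Proof. by rewrite /sgn0; case: ifP => _ //; rewrite rmorphN1. Qed.

Lemma DC : (D%:R : C) = (D%:R : R)%:C.
Proof. exact: natC. Qed.

Lemma D_gt0R : (0 : R) < D%:R.
Proof. by rewrite ltr0n D_gt0. Qed.

Lemma Im_divD (y : C) : complex.Im (y / D%:R) = complex.Im y / D%:R.
Proof. by case: y => a b; rewrite DC divC_real. Qed.

Definition qq : R := expR (- (pi * sq / D%:R)).
Definition AA (w : C) : R := expR (2 * pi * `|complex.Im w|).

Lemma qq_ge0 : 0 <= qq.
Proof. exact/ltW/expR_gt0. Qed.

Lemma qq_lt1 : qq < 1.
Proof.
rewrite /qq expR_lt1 oppr_lt0 divr_gt0 ?D_gt0R // mulr_gt0 ?pi_gt0 //; exact: sq_gt0.
Qed.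

Lemma AA_ge0 w : 0 <= AA w.
Proof. exact/ltW/expR_gt0. Qed.

Lemma Psi_factor_bound (w : C) (a : nat) (b : int) :
  normc (Psi_factor d w (a%:R + b%:~R * omega d) - 1) <= AA w * qq ^+ absz b.
Proof.
rewrite /Psi_factor.
have -> : forall X : C, 1 - X - 1 = - X by move=> X; ring.
rewrite normcN normc_ee sgn0E Im_alpha pmulr_lge0; last by rewrite divr_gt0 ?sq_gt0.
rewrite Im_realC_mul /AA /qq -expRM_natl -expRD ler_expR.
rewrite ImD Im_divD Im_alpha (natr_absz _ b) (intr_norm _ b).
set t : R := b%:~R; set u := complex.Im w.
have hp := pi_gt0 R; have hs := sq_gt0; have hD := D_gt0R.
have e1 : t * (sq / 2) / D%:R = t * (sq / D%:R) / 2 by rewrite !mulrA; ring.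
rewrite e1.
set c := sq / D%:R.
have hc : 0 < c by rewrite divr_gt0.
have -> : - (pi * sq / D%:R) = - (pi * c) by rewrite /c mulrA.
have hu1 : - u <= `|u| by rewrite -normrN ler_norm.
have hu2 : u <= `|u| by rewrite ler_norm.
case: (lerP 0 t) => ht.
- rewrite ger0_norm // mul1r.
  have : pi * (- u) <= pi * `|u| by rewrite ler_wpM2l // ltW.
  nra.
- rewrite ltr0_norm //.
  have : pi * u <= pi * `|u| by rewrite ler_wpM2l // ltW.
  nra.
Qed.

Definition Uf (w : C) (b : int) : C :=
  \prod_(a < D) Psi_factor d w (a%:R + b%:~R * omega d).

Definition KK (w : C) : R := D%:R * AA w * expR (D%:R * AA w).

Lemma KK_ge0 w : 0 <= KK w.
Proof. by rewrite /KK !mulr_ge0 ?AA_ge0 //; exact/ltW/expR_gt0. Qed.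

Lemma Uf_bound (w : C) (b : int) : normc (Uf w b - 1) <= KK w * qq ^+ absz b.
Proof.
rewrite /Uf.
have -> : \prod_(a < D) Psi_factor d w (a%:R + b%:~R * omega d) =
   \prod_(a < D) (1 + (Psi_factor d w (a%:R + b%:~R * omega d) - 1)).
  by apply: eq_bigr => k _; ring.
apply: le_trans (normc_prod1 _ _) _.
set S := \sum_(k < D) normc (Psi_factor d w (k%:R + b%:~R * omega d) - 1).
have hq : 0 <= qq ^+ absz b <= 1 by rewrite exprn_ge0 ?qq_ge0 // exprn_ile1 ?qq_ge0 // ltW ?qq_lt1.
have hA := AA_ge0 w.
have hS : S <= D%:R * (AA w * qq ^+ absz b).
  have -> : D%:R * (AA w * qq ^+ absz b) = \sum_(k < D) (AA w * qq ^+ absz b)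
    by rewrite sumr_const card_ord mulr_natl.
  rewrite /S; apply: ler_sum => k _; exact: Psi_factor_bound.
have hS0 : 0 <= S by rewrite /S sumr_ge0 // => k _; exact: normc_ge0.
have h1 := prod_le_expR (index_enum 'I_D)
   (fun k : 'I_D => normc (Psi_factor d w (k%:R + b%:~R * omega d) - 1)) (fun k => normc_ge0 _).
rewrite -/S in h1.
have h2 := expR_sub1 _ hS0.
have hn : (0 : R) <= D%:R by [].
have hK : S <= D%:R * AA w.
  apply: le_trans hS _; apply: ler_wpM2l => //; case/andP: hq => ? ?.
  rewrite -[X in _ <= X]mulr1; exact: ler_wpM2l.
have he : expR S <= expR (D%:R * AA w) by rewrite ler_expR.
have h3 : S * expR S <= KK w * qq ^+ absz b.
  rewrite /KK mulrAC -(mulrA (D%:R)); apply: ler_pM => //; exact/ltW/expR_gt0.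
lra.
Qed.


Definition Fs (w σ β : C) : C := 1 - ee (σ * (w + β / D%:R)).

Definition sg (b : int) : C := sgn0 (b%:~R : R).

Lemma sgE (b : int) : sg b = if (0 <= b)%R then 1 else -1.
Proof. by rewrite /sg /sgn0 ler0z. Qed.

Lemma sg_pm (b : int) : sg b = 1 \/ sg b = -1.
Proof. rewrite sgE; case: ifP; auto. Qed.

Lemma sgn_alpha (a : nat) (b : int) :
  sgn0 (complex.Im (a%:R + b%:~R * omega d : C)) = sg b.
Proof. by rewrite /sg /sgn0 Im_alpha pmulr_lge0 // divr_gt0 ?sq_gt0. Qed.

Lemma DC_neq0 : (D%:R : C) != 0.
Proof. by rewrite pnatr_eq0 -lt0n D_gt0. Qed.

Lemma Fs_shift (w σ β : C) : (σ = 1 \/ σ = -1) -> Fs w σ (β + D%:R) = Fs w σ β.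
Proof.
move=> hs; rewrite /Fs.
have -> : σ * (w + (β + D%:R) / D%:R) = σ * (w + β / D%:R) + σ.
  by field; exact: DC_neq0.
case: hs => ->.
- by have := ee_shift (1 * (w + β / D%:R)) 1; rewrite mulr1z => ->.
- by have := ee_shift (-1 * (w + β / D%:R)) (-1); rewrite mulrN1z => ->.
Qed.

Lemma prod_period (G : int -> C) (P : nat) (hG : forall x, G (x + P%:Z) = G x) (c : int) :
  \prod_(a < P) G (a%:Z + c) = \prod_(a < P) G a%:Z.
Proof.
have step : forall c, \prod_(a < P) G (a%:Z + (c + 1)) = \prod_(a < P) G (a%:Z + c).
  move=> c0; case: P hG => [|P] hG'; first by rewrite !big_ord0.
  rewrite big_ord_recr big_ord_recl /= mulrC.
  congr (_ * _).
    by rewrite -[RHS]hG'; congr G; lia.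
  apply: eq_bigr => k _; congr G; rewrite /bump leq0n /= PoszD; ring.
have hpos : forall n : nat, \prod_(a < P) G (a%:Z + n%:Z) = \prod_(a < P) G (a%:Z + 0).
  by elim=> [//|n IH]; rewrite -IH -(step n%:Z); apply: eq_bigr => k _; congr G; lia.
have hneg : forall n : nat, \prod_(a < P) G (a%:Z + - n%:Z) = \prod_(a < P) G (a%:Z + 0).
  elim=> [|n IH]; first by apply: eq_bigr => k _; congr G; lia.
  by rewrite -IH -(step (- n.+1%:Z)); apply: eq_bigr => k _; congr G; lia.
have -> : \prod_(a < P) G a%:Z = \prod_(a < P) G (a%:Z + 0) by apply: eq_bigr => k _; rewrite addr0.
case: c => n; first exact: hpos.
by rewrite NegzE hneg.
Qed.

Definition V (w σ : C) (b : int) : C := \prod_(a < D) Fs w σ (a%:R + b%:~R * omega d).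

Lemma Uf_V (w : C) (b : int) : Uf w b = V w (sg b) b.
Proof. by apply: eq_bigr => a _; rewrite /Psi_factor sgn_alpha. Qed.

Lemma Ushift_V (w : C) (c e b : int) :
  \prod_(a < D) Psi_factor d (w + (c%:~R + e%:~R * omega d) / D%:R) (a%:R + b%:~R * omega d)
  = V w (sg b) (b + e).
Proof.
rewrite /V.
have -> : \prod_(a < D) Psi_factor d (w + (c%:~R + e%:~R * omega d) / D%:R) (a%:R + b%:~R * omega d)
   = \prod_(a < D) (fun x : int => Fs w (sg b) (x%:~R + (b + e)%:~R * omega d)) (a%:Z + c).
  apply: eq_bigr => a _; rewrite /Psi_factor sgn_alpha /Fs /=.
  congr (1 - ee (_ * _)); rewrite !intrD; field; exact: DC_neq0.
rewrite (prod_period (fun x : int => Fs w (sg b) (x%:~R + (b + e)%:~R * omega d))) //.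
move=> x /=; rewrite intrD.
have -> : (x%:~R + (D%:Z)%:~R + (b + e)%:~R * omega d : C) =
  (x%:~R + (b + e)%:~R * omega d) + D%:R by rewrite -pmulrn; ring.
rewrite Fs_shift //; exact: sg_pm.
Qed.

Definition rho (w σ : C) (b : int) : C :=
  \prod_(a < D) (- ee (- σ * (w + (a%:R + b%:~R * omega d) / D%:R))).

Lemma V_flip (w σ : C) (b : int) : V w (- σ) b = rho w σ b * V w σ b.
Proof.
rewrite /V /rho -big_split; apply: eq_bigr => a _ /=.
rewrite /Fs mulNr.
set y := σ * _.
have h := eeN y.
rewrite mulrBr mulr1 mulNr opprK h; ring.
Qed.


Lemma sum_nat (n : nat) : (\sum_(a < n) (a%:R : C)) * 2 = n%:R * (n%:R - 1).
Proof.
elim: n => [|n IH]; first by rewrite big_ord0 mul0r mul0r.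
rewrite big_ord_recr /= mulrDl IH -natr1; ring.
Qed.

Lemma sum_lin (n : nat) (c0 c1 : C) :
  \sum_(a < n) (c0 + a%:R * c1) = n%:R * c0 + (n%:R * (n%:R - 1) / 2) * c1.
Proof.
rewrite big_split /= sumr_const card_ord -mulr_suml -sum_nat mulr_natl.
by congr (_ + _); field.
Qed.

Lemma neg_ee (x : C) : - ee x = ee (2^-1 + x).
Proof. by rewrite eeD ee_half mulN1r. Qed.

Lemma rho1 (w : C) (b : int) :
  rho w 1 b = ee (2^-1 - D%:R * w - b%:~R * omega d).
Proof.
rewrite /rho (eq_bigr (fun a : 'I_D => ee ((2^-1 - (w + b%:~R * omega d / D%:R)) + a%:R * (- (D%:R)^-1)))); last first.
  by move=> a _; rewrite neg_ee; congr ee; field; exact: DC_neq0.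
rewrite ee_sum sum_lin; congr ee; field; exact: DC_neq0.
Qed.

Lemma rhom1 (w : C) (b : int) :
  rho w (-1) b = ee (- 2^-1 + D%:R * w + b%:~R * omega d).
Proof.
rewrite /rho (eq_bigr (fun a : 'I_D => ee ((2^-1 + (w + b%:~R * omega d / D%:R)) + a%:R * ((D%:R)^-1)))); last first.
  by move=> a _; rewrite neg_ee; congr ee; field; exact: DC_neq0.
rewrite ee_sum sum_lin -[RHS](ee_shift _ (D%:Z)); congr ee.
rewrite -pmulrn; field; exact: DC_neq0.
Qed.


Definition Pn (w : C) (N : nat) : C :=
  \prod_(k < N.*2.+1) \prod_(a < D) Psi_factor d w (a%:R + ((k%:Z - N%:Z)%:~R) * omega d).

Definition Phi (w : C) (e : int) : C :=
  ee (e%:~R / 2 - e%:~R * D%:R * w - omega d * (e%:~R * (e%:~R - 1) / 2)).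

Lemma prod_window_pos (w : C) (e0 N : nat) : (e0 <= N)%N ->
  \prod_(k < N.*2.+1) (if (N - e0 <= k < N)%N then rho w 1 (k%:Z - N%:Z + e0%:Z) else 1)
  = Phi w e0%:Z.
Proof.
move=> hN.
rewrite (ordW _ _ _ (fun k => if (N - e0 <= k < N)%N then rho w 1 (k%:Z - N%:Z + e0%:Z) else 1)).
rewrite (big_cat_nat _ (n := (N - e0)%N)) //=; last by lia.
rewrite (big_cat_nat _ (m := (N - e0)%N) (n := N)) //=; try lia.
rewrite big1_seq; last by move=> k /andP[_]; rewrite mem_index_iota => hk; case: ifP => //; lia.
rewrite [X in _ * (_ * X)]big1_seq; last by move=> k /andP[_]; rewrite mem_index_iota => hk; case: ifP => //; lia.
rewrite mul1r mulr1.
rewrite (eq_big_nat _ _ (F2 := fun k => rho w 1 (k%:Z - N%:Z + e0%:Z))); last first.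
  by move=> k hk; rewrite hk.
rewrite -{1}(ssrnat.add0n (N - e0)%N) big_addn.
have -> : (N - (N - e0))%N = e0 by lia.
rewrite (eq_big_nat _ _ (F2 := fun j : nat => ee ((2^-1 - D%:R * w) + j%:R * (- omega d)))); last first.
  move=> j hj; rewrite rho1; congr ee.
  have -> : ((j + (N - e0))%:Z - N%:Z + e0%:Z) = j%:Z by lia.
  by rewrite -pmulrn; ring.
rewrite big_mkord.
rewrite ee_sum sum_lin /Phi; congr ee.
rewrite -pmulrn; by field.
Qed.


Lemma prod_window_neg (w : C) (n N : nat) : (n.+1 <= N)%N ->
  \prod_(k < N.*2.+1) (if (N <= k < N + n.+1)%N then rho w (-1) (k%:Z - N%:Z + Negz n) else 1)
  = Phi w (Negz n).
Proof.
move=> hN.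
rewrite (ordW _ _ _ (fun k => if (N <= k < N + n.+1)%N then rho w (-1) (k%:Z - N%:Z + Negz n) else 1)).
rewrite (big_cat_nat _ (n := N)) //=; last by lia.
rewrite (big_cat_nat _ (m := N) (n := (N + n.+1)%N)) //=; try lia.
rewrite big1_seq; last by move=> k /andP[_]; rewrite mem_index_iota => hk; case: ifP => //; lia.
rewrite [X in _ * (_ * X)]big1_seq; last by move=> k /andP[_]; rewrite mem_index_iota => hk; case: ifP => //; lia.
rewrite mul1r mulr1.
rewrite (eq_big_nat _ _ (F2 := fun k => rho w (-1) (k%:Z - N%:Z + Negz n))); last first.
  by move=> k hk; rewrite hk.
rewrite -{1}(ssrnat.add0n N) big_addn.
have -> : (N + n.+1 - N)%N = n.+1 by lia.
rewrite (eq_big_nat _ _ (F2 := fun j : nat => ee ((- 2^-1 + D%:R * w - n.+1%:R * omega d) + j%:R * omega d))); last first.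
  move=> j hj; rewrite rhom1; congr ee.
  have -> : ((j + N)%:Z - N%:Z + Negz n) = j%:Z - n.+1%:Z by rewrite NegzE; lia.
  by rewrite intrB -!pmulrn; ring.
rewrite big_mkord.
rewrite ee_sum sum_lin /Phi; congr ee.
rewrite NegzE intrN -pmulrn; by field.
Qed.

Lemma shift_window (w : C) (c e : int) (N : nat) : (absz e <= N)%N ->
  Pn (w + (c%:~R + e%:~R * omega d) / D%:R) N =
  Phi w e * \prod_(k < N.*2.+1) Uf w (k%:Z - N%:Z + e).
Proof.
move=> hN; rewrite /Pn.
under eq_bigr => k _ do rewrite Ushift_V.
case: e hN => [e0|n] /= hN.
- have h : forall k : 'I_(N.*2.+1), V w (sg (k%:Z - N%:Z)) (k%:Z - N%:Z + e0%:Z) =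
     (if (N - e0 <= k < N)%N then rho w 1 (k%:Z - N%:Z + e0%:Z) else 1) * Uf w (k%:Z - N%:Z + e0%:Z).
    move=> k; rewrite Uf_V; case: ifP => hk.
    + have -> : sg (k%:Z - N%:Z) = - 1 by rewrite sgE; case: ifP => //; lia.
      have -> : sg (k%:Z - N%:Z + e0%:Z) = 1 by rewrite sgE; case: ifP => //; lia.
      exact: V_flip.
    + have -> : sg (k%:Z - N%:Z) = sg (k%:Z - N%:Z + e0%:Z).
        rewrite !sgE; have -> // : (0 <= k%:Z - N%:Z)%R = (0 <= k%:Z - N%:Z + e0%:Z)%R.
        by apply/idP/idP; lia.
      by rewrite mul1r.
  rewrite (eq_bigr _ (fun k _ => h k)) big_split /=.
  by rewrite prod_window_pos.
- have h : forall k : 'I_(N.*2.+1), V w (sg (k%:Z - N%:Z)) (k%:Z - N%:Z + Negz n) =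
     (if (N <= k < N + n.+1)%N then rho w (-1) (k%:Z - N%:Z + Negz n) else 1) * Uf w (k%:Z - N%:Z + Negz n).
    move=> k; rewrite Uf_V; case: ifP => hk.
    + have -> : sg (k%:Z - N%:Z) = 1 by rewrite sgE; case: ifP => //; lia.
      have -> : sg (k%:Z - N%:Z + Negz n) = - 1 by rewrite sgE NegzE; case: ifP => //; lia.
      by have := V_flip w (-1) (k%:Z - N%:Z + Negz n); rewrite opprK.
    + have -> : sg (k%:Z - N%:Z) = sg (k%:Z - N%:Z + Negz n).
        rewrite !sgE; have -> // : (0 <= k%:Z - N%:Z)%R = (0 <= k%:Z - N%:Z + Negz n)%R.
        by rewrite NegzE; apply/idP/idP; lia.
      by rewrite mul1r.
  rewrite (eq_bigr _ (fun k _ => h k)) big_split /=.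
  by rewrite prod_window_neg.
Qed.


Theorem core (w : C) (c e : int) :
  clim (Pn (w + (c%:~R + e%:~R * omega d) / D%:R)) = Phi w e * clim (Pn w).
Proof.
have -> : Pn w = PP R (Uf w) :> (nat -> C) by [].
apply: clim_eq => eps e0.
have hf := Uf_bound w.
have hP : 0 < eps / (normc (Phi w e) + 1).
  by rewrite divr_gt0 // ltr_wpDl ?normc_ge0.
have [N0 H] := @Qwin_lim R (Uf w) (KK w) qq (KK_ge0 w) qq_ge0 qq_lt1 hf e _ hP.

exists (N0 + absz e)%N => N hN.
rewrite shift_window; last by lia.
have h := H N ltac:(lia).
rewrite -mulrBr normcM.
have hn := normc_ge0 (Phi w e).
set x := normc (_ - _) in h *.
rewrite ltr_pdivlMr ?ltr_wpDl // in h.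
have hx := normc_ge0 (\prod_(k < N.*2.+1) Uf w (k%:Z - N%:Z + e) - clim (PP R (Uf w))).
rewrite -/x in hx.
nra.
Qed.

End Concrete.


Section Herm.
Variables (R : realType) (m : nat) (H : 'M[R[i]]_m).
Local Notation C := R[i].

Lemma hermDl (x y v : 'rV[C]_m) : herm H (x + y) v = herm H x v + herm H y v.
Proof. by rewrite /herm !mulmxDl mxE. Qed.

Lemma hermNl (x v : 'rV[C]_m) : herm H (- x) v = - herm H x v.
Proof. by rewrite /herm !mulNmx mxE. Qed.

Lemma hermBl (x y v : 'rV[C]_m) : herm H (x - y) v = herm H x v - herm H y v.
Proof. by rewrite hermDl hermNl. Qed.

Lemma hermZl (c : C) (x v : 'rV[C]_m) : herm H (c *: x) v = c * herm H x v.
Proof. by rewrite /herm -!scalemxAl mxE. Qed.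

Lemma herm_sum (x y : 'rV[C]_m) :
  herm H x y = \sum_j \sum_i x 0 i * H i j * conjc (y 0 j).
Proof.
rewrite /herm !mxE; apply: eq_bigr => j _; rewrite ?mxE mulr_suml.
by apply: eq_bigr => i _; rewrite ?mxE.
Qed.

Lemma herm_sym (x y : 'rV[C]_m) : H^T = map_mx conjc H ->
  herm H y x = conjc (herm H x y).
Proof.
move=> hH.
have hc : forall i j, conjc (H i j) = H j i.
  move=> i j; have := congr1 (fun M : 'M[C]_m => M j i) hH; rewrite !mxE => ->; by rewrite conjcK.
rewrite !herm_sum rmorph_sum exchange_big /=; apply: eq_bigr => i _.
rewrite rmorph_sum; apply: eq_bigr => j _.
rewrite !rmorphM /=.
have e1 : conjc (conjc (y 0 i)) = y 0 i by exact: conjcK.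
have e2 := hc j i.
rewrite -[X in _ = _ * X * _]/(conjc (H j i)) e2.
rewrite -[X in _ = _ * X]/(conjc (conjc (y 0 i))) e1; ring.
Qed.
End Herm.


Section Aux.
Variables (R : realType) (d : int).
Hypothesis hd0 : d < 0.
Local Notation C := R[i].
Local Notation D := (absz d).

Lemma delta_neq0 : delta d != 0 :> C.
Proof.
rewrite delta_eq; apply/negP => /eqP/eqP; rewrite eq_complex /= => /andP[_ /eqP h].
have := @sq_gt0 R d hd0; rewrite /sq in h *; lra.
Qed.

Lemma delta_sq : delta d * delta d = d%:~R :> C.
Proof.
rewrite delta_eq intC (@dR R d hd0); apply/eqP; rewrite eq_complex /=.
have := @sq2 R d hd0; rewrite expr2 => ->.
apply/andP; split; apply/eqP; ring.
Qed.

Lemma conj_delta : conjc (delta d) = - delta d :> C.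
Proof. by rewrite delta_eq /=; apply/eqP; rewrite eq_complex /= oppr0 !eqxx. Qed.

Lemma conj_omega : conjc (omega d) = d%:~R - omega d :> C.
Proof.
rewrite (@omega_eq R d) intC /=; apply/eqP; rewrite eq_complex /=; by apply/andP; split; apply/eqP; field.
Qed.

Lemma cM (x y : C) : conjc (x * y) = conjc x * conjc y.
Proof. by case: x => a b; case: y => c e; apply/eqP; rewrite eq_complex /=; apply/andP; split; apply/eqP; ring. Qed.

Lemma cD (x y : C) : conjc (x + y) = conjc x + conjc y.
Proof. by case: x => a b; case: y => c e; apply/eqP; rewrite eq_complex /=; apply/andP; split; apply/eqP; ring. Qed.

Lemma conj_int (k : int) : conjc (k%:~R : C) = k%:~R.
Proof. by rewrite intC conjc_real. Qed.

Lemma inv_delta : (delta d)^-1 = 0 +i* (- (sq R d)^-1) :> C.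
Proof.
have hs := @sq_gt0 R d hd0.
apply: (mulfI delta_neq0); rewrite divff ?delta_neq0 // delta_eq /=.
apply/eqP; rewrite eq_complex /=.
have hs0 : sq R d != 0 by rewrite gt_eqF.
by apply/andP; split; apply/eqP; field.
Qed.

Lemma g0_eq (a b : int) : (a%:~R + b%:~R * omega d : C) =
  (a%:~R + b%:~R * (d%:~R / 2)) +i* (b%:~R * (sq R d / 2)).
Proof.
rewrite !intC (@omega_eq R d); apply/eqP; rewrite eq_complex /=.
by apply/andP; split; apply/eqP; ring.
Qed.

Lemma tri_int (e : int) : exists mm : int, (e%:~R * (e%:~R - 1) / 2 : C) = mm%:~R.
Proof.
have h2 : (2 : C) != 0 by rewrite pnatr_eq0.
case: e => n.
- exists (\sum_(j < n) j)%N; rewrite -!pmulrn.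
  have h := sum_nat R n; rewrite -natr_sum in h.
  apply: (mulIf h2); rewrite h; by field.
- exists (\sum_(j < n.+2) j)%N; rewrite -!pmulrn.
  have h := sum_nat R n.+2; rewrite -natr_sum in h.
  apply: (mulIf h2); rewrite h NegzE intrN -pmulrn -!natr1; by field.
Qed.

End Aux.


Theorem proposition2
  (R : realType) (d : int) (n : nat)
  (* k = Q(sqrt d) imaginary quadratic of discriminant d < 0 *)
  (hd : neg_fund_disc d)
  (hn : (0 < n)%N)
  (* hermitian k-space V of signature (1, n+1), Gram matrix H *)
  (H : 'M[R[i]]_(n.+2)) (hH : herm_k_sig d H)
  (* even integral full-rank O_k-lattice L *)
  (L : set 'rV[R[i]]_(n.+2)) (hL : is_lattice d L)
  (hLev : even_integral d H L)
  (* primitive isotropic l in L, isotropic l' in L', <l,l'> = delta^{-1} *)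
  (l l' : 'rV[R[i]]_(n.+2))
  (hl : primitive d L l) (hll : herm H l l = 0)
  (hl' : dual d H L l') (hl'l' : herm H l' l' = 0)
  (hll' : herm H l l' = (delta d)^-1)
  (* Gamma_l = {[h,t] : h in N Z, t in D_{l,Gamma}}, with N in Q_{>0} and
     D_{l,Gamma} a finite-index sublattice of D *)
  (Nq : rat) (hNq : (0 < Nq)%R)
  (Dsub : set 'rV[R[i]]_(n.+2))
  (hDsub : Dsub `<=` Dlat H L l l')
  (hDsub0 : Dsub 0)
  (hDsubB : forall x y, Dsub x -> Dsub y -> Dsub (x - y))
  (hDsubfin : exists M : nat, (0 < M)%N /\
                forall x, Dlat H L l l' x -> Dsub (x *+ M))
  (* lambda in L' with q(lambda) < 0 and <lambda, l> = 0 *)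
  (lam : 'rV[R[i]]_(n.+2))
  (hlam : dual d H L lam) (hlamneg : herm H lam lam < 0)
  (hlaml : herm H lam l = 0)
  (* [h,t] in Gamma_l *)
  (h : rat) (hh : exists j : int, h = Nq * j%:~R)
  (t : 'rV[R[i]]_(n.+2)) (ht : Dsub t)
  (* z = z(tau, sigma) in U_eps(l) *)
  (eps : R) (heps : (0 < eps)%R)
  (tau : R[i]) (sig : 'rV[R[i]]_(n.+2))
  (hsig : herm H sig l = 0 /\ herm H sig l' = 0)
  (hsiegel : 2 * (complex.Im tau)%:C * `|delta d| * `|herm H l l'| ^+ 2
               > - herm H sig sig)
  (hU : let z := zpt d H l l' tau sig in
        0 < herm H z z /\
        herm H z z * `|herm H l' l| ^+ 2 / `|herm H z l| ^+ 2 > (eps^-1)%:C)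
  (* Psi_lambda(z) != 0, so that J_lambda([h,t], z) is defined *)
  (hPsi : Psi d H lam (zpt d H l l' tau sig) != 0) :
  let z := zpt d H l l' tau sig in
  let J := Psi d H lam (heis0 H l t z) / Psi d H lam z in
  let r := (complex.Re (herm H t lam))%:C in
  forall zeta : R[i],
    (forall x, in_Ok d x <-> exists a b : int, x = a%:~R + b%:~R * zeta) ->
    complex.Im zeta = (complex.Re `|delta d|) / 2 ->
    J = ee (- 2 * (`|d|%:R) * herm H z lam * r - 2 * r ^+ 2 * zeta
            + r * (zeta + 1)).
Proof.
move=> z J r zeta hz1 hz2.
have ez : z = zpt d H l l' tau sig by [].
rewrite -ez in hPsi; clearbody z.
have hd0 : d < 0 by case: hd.
have hHs := hH.1.
set w := herm H z lam.
have hl_lam : herm H l lam = 0.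
  by rewrite (@herm_sym R _ H lam l hHs) hlaml rmorph0.
have hzl : herm H z l = conjc (delta d)^-1.
  rewrite ez /zpt hermDl hermBl hermZl hll mulr0 subr0 hsig.1 addr0.
  by rewrite (@herm_sym R _ H l l' hHs) hll'.
have hw' : herm H (heis0 H l t z) lam = w + conjc (delta d)^-1 * herm H t lam.
  by rewrite /heis0 !hermBl !hermDl !hermZl hl_lam !mulr0 !subr0 hzl.
have hLt : L t by have := hDsub _ ht; case.
have [a0 [b0 hab]] := hlam.2 t hLt.
have htl : herm H t lam = conjc (herm H lam t) by rewrite (@herm_sym R _ H lam t hHs).
have hx : herm H lam t = (a0%:~R + b0%:~R * omega d) / delta d.
  by rewrite -hab mulfK // delta_neq0.
have hdn := @delta_neq0 R d hd0.
have hDd : ((absz d)%:R : R[i]) = - (d%:~R : R[i]).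
  by rewrite intC (@dR R d hd0) rmorphN opprK natC.
have claim1 : conjc (delta d)^-1 * herm H t lam =
    ((- a0 - b0 * d)%:~R + b0%:~R * omega d) / (absz d)%:R.
  rewrite htl hx !cM !conjc_inv cD cM.
  rewrite !conj_int (@conj_omega R d) conj_delta.
  rewrite hDd !intrD !intrN intrM -(@delta_sq R d hd0).
  by field; rewrite ?oppr_eq0 ?mulf_neq0.
have claim2 : complex.Re (herm H t lam) = b0%:~R / 2.
  rewrite htl.
  have -> : forall x : R[i], complex.Re (conjc x) = complex.Re x by case.
  rewrite hx (@g0_eq R d) (@inv_delta R d hd0) /=.
  have hs := @sq_gt0 R d hd0.
  have hs0 : sq R d != 0 by rewrite gt_eqF.
  by field.
have hPsi' : Psi d H lam (heis0 H l t z) = Phi R d w b0 * Psi d H lam z.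
  have -> : Psi d H lam (heis0 H l t z) = clim (Pn R d (herm H (heis0 H l t z) lam)) by [].
  by rewrite hw' claim1 (@core R d hd0).
have -> : J = Phi R d w b0 by rewrite /J hPsi' mulfK.
have hr : r = b0%:~R / 2.
  by rewrite /r claim2 rmorphM fmorphV intC /= (natC 2).
have [a1 [b1 hz]] : exists a1 b1 : int, zeta = a1%:~R + b1%:~R * omega d.
  apply/(hz1 zeta).2; exists 0, 1; by rewrite mulr0z mulr1z add0r mul1r.
have hb1 : b1 = 1.
  move: hz2; rewrite hz (@g0_eq R d) normc_def delta_eq /=.
  rewrite expr0n /= add0r sqrtr_sqr ger0_norm; last exact/ltW/(@sq_gt0 R d hd0).
  have hs := @sq_gt0 R d hd0.
  move=> hh1; apply: (@intr_inj R); rewrite /=.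
  have : (b1%:~R - 1) * (sq R d / 2) = 0 :> R by rewrite mulrBl hh1 mul1r subrr.
  move/eqP; rewrite mulf_eq0 subr_eq0 => /orP[/eqP -> //|].
  by rewrite mulf_eq0 invr_eq0 pnatr_eq0 orbF gt_eqF.
have [mm hm] := @tri_int R b0.
rewrite /Phi -[RHS](ee_shift _ (a1 * mm)); congr ee.
rewrite hr hz hb1 mulr1z intrM -hm /w.
by field.
Qed.
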